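(* Let $M=(\mathcal{X},\mathcal{A},T,r,H,\rho)$, $\pi_e$, $\pi_b$, $K\ge1$, and $(\widetilde M,\widetilde\pi_e,\widetilde\pi_b)$ be as in the Replicator construction below. Then: (a) $\max_{l}\max_{\tilde x\in\widetilde{\mathcal{X}}_l,a}\frac{d_l^{\widetilde\pi_e}(\tilde x,a;\widetilde M)}{d_l^{\widetilde\pi_b}(\tilde x,a;\widetilde M)}\le 2\max_h\max_{x\in\mathcal{X}_h,a}\frac{d_h^{\pi_e}(x,a;M)}{d_h^{\pi_b}(x,a;M)}$; (b) the state-action value function of $\widetilde\pi_e$ in $\widetilde M$ is given, for $h\le H-1$, $x\in\mathcal{X}_h$, $k\in[K]$, $a\in\mathcal{A}$, by $Q^{\widetilde\pi_e}((x,k),a;\widetilde M)=Q^{\pi_e}_h(x,a;M)$ if $k=K$; $=Q^{\pi_e}_h(x,\pi_e(x);M)$ if $k<K$ and $a=\pi_e(x)$; $=\sum_{x'\in\mathcal{X}_h}d_h^{\pi_b}(x';M)Q_h^{\pi_e}(x',\pi_e(x');M)$ if $k<K$ and $a\ne\pi_e(x)$; and $Q^{\widetilde\pi_e}((x,1),a;\widetilde M)=Q_H^{\pi_e}(x,a;M)$ for $x\in\mathcal{X}_H$. In particular $V^{\widetilde\pi_e}(\widetilde\rho;\widetilde M)=V^{\pi_e}(\rho;M)$.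
   Context: $M$ is a layered finite-horizon MDP with state space $\mathcal{X}_1\cup\dots\cup\mathcal{X}_H$, action set $\mathcal{A}$ with $|\mathcal{A}|\ge2$, transition $T$, mean reward $r$, initial distribution $\rho\in\Delta(\mathcal{X}_1)$; $\pi_e$ is a deterministic evaluation policy and $\pi_b$ an offline policy; $d_h^\pi(x;M)=\Pr(x_h=x)$ and $d_h^\pi(x,a;M)=d_h^\pi(x;M)\pi(a|x)$; ratios with $0/0$ are ignored. Replicator construction with integer $K\ge1$: fix a deterministic $\pi_{\mathrm{other}}$ with $\pi_{\mathrm{other}}(x)\ne\pi_e(x)$ for all $x$. $\widetilde M$ has horizon $\widetilde H=(H-1)K+1$; its layer $l=(h-1)K+k$ ($h\in[H-1]$, $k\in[K]$) is $\{(x,k):x\in\mathcal{X}_h\}$, and its last layer $\widetilde H$ is $\{(x,1):x\in\mathcal{X}_H\}$; initial distribution $\widetilde\rho((x,1))=\rho(x)$. Transitions: for $h\le H-1$, $k\le K-1$, $x,x'\in\mathcal{X}_h$: $\widetilde T((x',k+1)|(x,k),a)=\mathbb{I}\{x'=x\}$ if $a=\pi_e(x)$ and $=d_h^{\pi_b}(x';M)$ otherwise; for $k=K$, $x\in\mathcal{X}_h$, $x'\in\mathcal{X}_{h+1}$: $\widetilde T((x',1)|(x,K),a)=T(x'|x,a)$. Rewards: $\widetilde r((x,k),a)=0$ if $x\in\mathcal{X}_h$ with $h\le H-1$ and $k<K$; $\widetilde r((x,K),a)=r(x,a)$ for $x\in\mathcal{X}_h$, $h\le H-1$; $\widetilde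 r((x,1),a)=r(x,a)$ for $x\in\mathcal{X}_H$. Policies: $\widetilde\pi_e((x,k))=\pi_e(x)$; $\widetilde\pi_b((x,k))=\pi_b(\cdot|x)$ if $k=K$ and $\widetilde\pi_b((x,k))=\frac12\delta_{\pi_e(x)}+\frac12\delta_{\pi_{\mathrm{other}}(x)}$ otherwise. *)

(* Defs.v *)
From mathcomp Require Import all_boot all_order all_algebra.
Set Implicit Arguments. Unset Strict Implicit. Unset Printing Implicit Defensive.
Import Order.TTheory GRing.Theory Num.Theory.
Local Open Scope ring_scope.

(* A finite-horizon MDP over a finite state type S, whose states are split
   into layers via [lay] (layer numbers 1..hor).  Transition kernel
   [tr x a x'] = T(x'|x,a), mean reward [rew], initial distribution [init]. *)
Record mdp (R : realFieldType) (S A : finType) := MDP {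
  hor  : nat;
  lay  : S -> nat;
  tr   : S -> A -> S -> R;
  rew  : S -> A -> R;
  init : S -> R }.

Section Gen.
Variables (R : realFieldType) (S A : finType).
Implicit Types (M : mdp R S A) (pi : S -> A -> R).

Definition is_layered_mdp M : Prop :=
  [/\ (0 < hor M)%N,
      (forall x, (1 <= lay M x <= hor M)%N),
      (forall x, 0 <= init M x) /\ \sum_x init M x = 1,
      (forall x, init M x != 0 -> lay M x = 1%N) &
      (forall x a, (lay M x < hor M)%N ->
         [/\ forall x', 0 <= tr M x a x',
             \sum_x' tr M x a x' = 1 &
             forall x', tr M x a x' != 0 -> lay M x' = (lay M x).+1])].

Definition is_policy pi : Prop :=
  forall x, (forall a, 0 <= pi x a) /\ \sum_a pi x a = 1.

Definition det_pol (p : S -> A) : S -> A -> R :=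
  fun x a => if a == p x then 1 else 0.

Definition occ_step M pi (d : S -> R) : S -> R :=
  fun x' => \sum_x \sum_a d x * pi x a * tr M x a x'.

(* d_h^pi(x;M) = Pr(x_h = x), h >= 1 (1-based time) *)
Definition occ M pi (h : nat) : S -> R := iter h.-1 (occ_step M pi) (init M).

Definition occSA M pi (h : nat) (x : S) (a : A) : R := occ M pi h x * pi x a.

(* Q-function with n remaining steps *)
Fixpoint Qrec M pi (n : nat) (x : S) (a : A) : R :=
  match n with
  | 0 => rew M x a
  | n'.+1 => rew M x a +
      \sum_x' tr M x a x' * \sum_a' pi x' a' * Qrec M pi n' x' a'
  end.

Definition Qfun M pi (h : nat) (x : S) (a : A) : R := Qrec M pi (hor M - h) x a.

Definition value M pi : R :=
  \sum_x init M x * \sum_a pi x a * Qfun M pi 1 x a.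

End Gen.
Arguments det_pol {R S A}.

(* The state (x,k), k in [K], is encoded as (x, k-1) with k-1 : 'I_K; the
   states of the last layer X_H only exist with k = 1. *)
Definition rep_state (S : finType) (K H : nat) (lay : S -> nat) :=
  {p : S * 'I_K | (lay p.1 < H)%N || (val p.2 == 0%N)}.

Section Rep.
Variables (R : realFieldType) (S A : finType) (M : mdp R S A) (K : nat).
Variables (pe : S -> A) (pb : S -> A -> R) (po : S -> A).

Definition RS : finType := rep_state K (hor M) (lay M).

Definition rx (p : RS) : S := (val p).1.
Definition rk (p : RS) : nat := val (val p).2.   (* = k - 1 *)

Definition rep_lay (p : RS) : nat := ((lay M (rx p)).-1 * K + rk p + 1)%N.

Definition rep_tr (p : RS) (a : A) (p' : RS) : R :=
  let x := rx p in let x' := rx p' in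
  if (lay M x < hor M)%N then
    if ((rk p).+1 < K)%N then
      (if (rk p' == (rk p).+1) && (lay M x' == lay M x) then
         (if a == pe x then (x' == x)%:R else occ M pb (lay M x) x')
       else 0)
    else (if rk p' == 0%N then tr M x a x' else 0)
  else 0.

Definition rep_rew (p : RS) (a : A) : R :=
  if ((rk p).+1 == K) || (lay M (rx p) == hor M) then rew M (rx p) a else 0.

Definition rep_init (p : RS) : R := if rk p == 0%N then init M (rx p) else 0.

Definition rep_mdp : mdp R RS A :=
  MDP ((hor M).-1 * K + 1)%N rep_lay rep_tr rep_rew rep_init.

Definition rep_pe (p : RS) : A := pe (rx p).

Definition rep_pb (p : RS) (a : A) : R :=
  if (rk p).+1 == K then pb (rx p) a
  else 2^-1 * det_pol pe (rx p) a + 2^-1 * det_pol po (rx p) a.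

End Rep.
Arguments rep_pe {R S A} M K pe.
Arguments rep_pb {R S A} M K pe pb po.

(* Main.v *)
Require Import Defs.
From mathcomp Require Import all_boot all_order all_algebra.
From mathcomp Require Import zify ring lra.
Import Order.TTheory GRing.Theory Num.Theory.
Set Implicit Arguments. Unset Strict Implicit. Unset Printing Implicit Defensive.
Local Open Scope ring_scope.

Section Gen1.
Variables (R : realFieldType) (S A : finType) (M : mdp R S A).
Hypothesis HL : is_layered_mdp M.

Lemma lay_bnd x : (1 <= lay M x <= hor M)%N.
Proof. by case: HL => _ H2 _ _ _; apply: H2. Qed.

Lemma occS pi h : (0 < h)%N -> occ M pi h.+1 = occ_step M pi (occ M pi h).
Proof. by case: h => // h _; rewrite /occ /= iterS. Qed.

Lemma occ1 pi : occ M pi 1 = init M.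
Proof. by []. Qed.

Lemma init_off x : lay M x != 1%N -> init M x = 0.
Proof.
case: HL => _ _ _ H4 _ Hx; apply/eqP; apply: contraNT Hx => Hx.
by apply/eqP; apply: H4.
Qed.

Lemma occ_off pi h x : (1 <= h <= hor M)%N -> lay M x != h -> occ M pi h x = 0.
Proof.
elim: h x => // h IH x /andP [Hh1 HhH] Hx.
case: h IH Hh1 HhH Hx => [|h] IH _ HhH Hx; first by rewrite occ1 init_off.
rewrite occS // /occ_step big1 // => y _; apply: big1 => a _.
case: (eqVneq (lay M y) h.+1) => Hy.
- have Hy' : (lay M y < hor M)%N by rewrite Hy.
  case: HL => _ _ _ _ H5.
  have [_ _ H] := H5 y a Hy'.
  case: (eqVneq (tr M y a x) 0) => Ht; first by rewrite Ht mulr0.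
  by move: (H x Ht); rewrite Hy => E; rewrite E eqxx in Hx.
- by rewrite IH ?mul0r // (ltnW HhH).
Qed.

Lemma occ_ge0 pi h x : (forall y a, 0 <= pi y a) -> (1 <= h <= hor M)%N ->
  0 <= occ M pi h x.
Proof.
move=> Hpi; elim: h x => // h IH x /andP [Hh1 HhH].
case: h IH Hh1 HhH => [|h] IH _ HhH.
  by rewrite occ1; case: HL => _ _ [H3 _] _ _.
rewrite occS // /occ_step; apply: sumr_ge0 => y _; apply: sumr_ge0 => a _.
case: (eqVneq (lay M y) h.+1) => Hy.
- have Hy' : (lay M y < hor M)%N by rewrite Hy.
  case: HL => _ _ _ _ H5.
  have [H _ _] := H5 y a Hy'.
  by rewrite mulr_ge0 // mulr_ge0 // IH // (ltnW HhH).
- by rewrite occ_off ?mul0r // (ltnW HhH).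
Qed.

Lemma occ_sum1 pi h : is_policy pi -> (1 <= h <= hor M)%N ->
  \sum_x occ M pi h x = 1.
Proof.
move=> Hpi; elim: h => // h IH /andP [Hh1 HhH].
case: h IH Hh1 HhH => [|h] IH _ HhH.
  by rewrite occ1; case: HL => _ _ [_ H3] _ _.
rewrite occS // /occ_step exchange_big /= -[RHS](IH (ltnW HhH)).
apply: eq_bigr => y _; rewrite exchange_big /=.
case: (eqVneq (lay M y) h.+1) => Hy.
- transitivity (\sum_a occ M pi h.+1 y * pi y a).
    apply: eq_bigr => a _; rewrite -big_distrr /=.
    have Hy' : (lay M y < hor M)%N by rewrite Hy.
    case: HL => _ _ _ _ H5.
    by have [_ -> _] := H5 y a Hy'; rewrite mulr1.
  by rewrite -big_distrr /=; case: (Hpi y) => _ ->; rewrite mulr1.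
- rewrite occ_off ?(ltnW HhH) //; apply: big1 => a _; apply: big1 => z _.
  by rewrite !mul0r.
Qed.

Lemma sum_det (p : S -> A) x (f : A -> R) :
  \sum_a det_pol p x a * f a = f (p x).
Proof.
rewrite (bigD1 (p x)) //= /det_pol eqxx mul1r big1 ?addr0 // => a Ha.
by rewrite (negbTE Ha) mul0r.
Qed.

Lemma sum_cond (I : finType) (c : pred I) (D G : I -> R) :
  \sum_i (if c i then D i else 0) * G i = \sum_(i | c i) D i * G i.
Proof.
by rewrite [RHS]big_mkcond; apply: eq_bigr => i _; case: (c i); rewrite ?mul0r.
Qed.

End Gen1.

Section Rep1.
Variables (R : realFieldType) (S A : finType) (M : mdp R S A) (K : nat).
Variables (pe : S -> A) (pb : S -> A -> R) (po : S -> A).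
Hypothesis HL : is_layered_mdp M.
Hypothesis HK : (0 < K)%N.

Definition ord_of (j : nat) : 'I_K := Ordinal (ltn_pmod j HK).
Definition mk0 (x : S) : RS M K := Sub (x, Ordinal HK) (orbT _).
Definition mk (j : nat) (x : S) : RS M K := insubd (mk0 x) (x, ord_of j).

Lemma rx_mk j x : rx (mk j x) = x.
Proof. by rewrite /rx /mk val_insubd; case: ifP. Qed.

Lemma rk_mk j x : (j < K)%N -> (lay M x < hor M)%N || (j == 0)%N -> rk (mk j x) = j.
Proof.
move=> Hj Hv; rewrite /rk /mk val_insubd /= modn_small // Hv /=.
by rewrite modn_small.
Qed.

Lemma rk_lt (p : RS M K) : (rk p < K)%N.
Proof. exact: ltn_ord. Qed.

Lemma rs_valid (p : RS M K) : (lay M (rx p) < hor M)%N || (rk p == 0)%N.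
Proof. exact: (valP p). Qed.

Lemma mk_rx j (p : RS M K) : rk p = j -> mk j (rx p) = p.
Proof.
move=> Hj; apply: val_inj; rewrite /mk val_insubd.
have Hv := rs_valid p; rewrite Hj in Hv.
rewrite /= modn_small ?Hv; last by rewrite -Hj rk_lt.
case: p Hj Hv => [[x k] Hp] /= Hj _; congr pair; apply: val_inj => /=.
by rewrite /rk /= in Hj; rewrite -Hj modn_small.
Qed.

Lemma slice (j : nat) (P : pred S) (F : RS M K -> R) :
  (j < K)%N -> (forall x, P x -> (lay M x < hor M)%N || (j == 0)%N) ->
  \sum_(p | (rk p == j) && P (rx p)) F p = \sum_(x | P x) F (mk j x).
Proof.
move=> Hj HP.
rewrite (reindex_onto (mk j) (@rx _ _ _ M K)); last by move=> p /andP [/eqP Hp _]; apply: mk_rx.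
apply: eq_bigl => x; rewrite rx_mk eqxx andbT.
case Px: (P x); rewrite ?andbF // andbT rk_mk ?eqxx //; exact: HP.
Qed.

Lemma slice0 (F : RS M K -> R) : \sum_(p | rk p == 0%N) F p = \sum_x F (mk 0 x).
Proof.
rewrite (eq_bigl (fun p => (rk p == 0%N) && xpredT (rx p))); last by move=> p; rewrite andbT.
by rewrite (@slice 0%N xpredT) // => x _; rewrite orbT.
Qed.

Lemma lay_next x a x' : (lay M x < hor M)%N -> tr M x a x' != 0 -> lay M x' = (lay M x).+1.
Proof. by case: HL => _ _ _ _ H5 Hx Ht; have [_ _ H] := H5 x a Hx; apply: H. Qed.

End Rep1.

Section Rep2.
Variables (R : realFieldType) (S A : finType) (M : mdp R S A) (K : nat).
Variables (pe : S -> A) (pb : S -> A -> R) (po : S -> A).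
Hypothesis HL : is_layered_mdp M.
Hypothesis HK : (0 < K)%N.

Local Notation Mt := (rep_mdp M K pe pb).
Local Notation pet := (det_pol (rep_pe M K pe)).
Local Notation mk := (mk M HK).

Definition Fq (p : RS M K) (a : A) : R :=
  let x := rx p in let h := lay M x in
  if (h < hor M)%N then
    (if (rk p).+1 == K then Qfun M (det_pol pe) h x a
     else if a == pe x then Qfun M (det_pol pe) h x (pe x)
     else \sum_(x' | lay M x' == h) occ M pb h x' * Qfun M (det_pol pe) h x' (pe x'))
  else Qfun M (det_pol pe) (hor M) x a.

Lemma Fq_pe (p : RS M K) : Fq p (pe (rx p)) = Qfun M (det_pol pe) (lay M (rx p)) (rx p) (pe (rx p)).
Proof.
rewrite /Fq; case: ifP => H1; first by case: ifP => //; rewrite eqxx.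
have := lay_bnd HL (rx p) => H2.
by have -> : lay M (rx p) = hor M by move/negbT: H1; lia.
Qed.

Lemma Qclaim n : forall (p : RS M K) a, (hor Mt - rep_lay p)%N = n ->
  Qrec Mt pet n p a = Fq p a.
Proof.
elim: n => [|n IH] p a Hn.
- have Hb := lay_bnd HL (rx p); have Hk := rk_lt p.
  have [HxH Hk0] : lay M (rx p) = hor M /\ rk p = 0%N.
    move: (rs_valid p) Hn; rewrite /rep_lay /=.
    case/orP => [Hl|/eqP Hk0]; first by nia.
    by rewrite Hk0; move=> Hn; split=> //; nia.
  by rewrite /= /rep_rew /Fq HxH eqxx orbT ltnn /Qfun subnn.
- have Hb := lay_bnd HL (rx p); have Hk := rk_lt p.
  have Hlt : (lay M (rx p) < hor M)%N.
    move: (rs_valid p) Hn; rewrite /rep_lay /=.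
    case/orP => [//|/eqP Hk0]; rewrite Hk0; nia.
  rewrite /=.
  under eq_bigr => p' _ do rewrite (sum_det (rep_pe M K pe)) /rep_pe.
  case: (eqVneq (rk p).+1 K) => HkK.
  + rewrite /rep_rew HkK eqxx /= /rep_tr Hlt HkK ltnn.
    rewrite sum_cond slice0 /Fq Hlt HkK eqxx /Qfun.
    have E : (hor M - lay M (rx p) = (hor M - (lay M (rx p)).+1).+1)%N by lia.
    rewrite E /=; congr (_ + _); apply: eq_bigr => x' _.
    rewrite (sum_det pe) rx_mk.
    case: (eqVneq (tr M (rx p) a x') 0) => Ht; first by rewrite Ht !mul0r.
    have Hx' := lay_next HL Hlt Ht.
    congr (_ * _); rewrite IH; last first.
      move: Hn; rewrite /rep_lay rx_mk rk_mk ?Hx' //= ; nia.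
    by have := Fq_pe (mk 0 x'); rewrite rx_mk => ->; rewrite /Qfun Hx'.
  + have Hk1 : ((rk p).+1 < K)%N by rewrite ltn_neqAle HkK.
    have Hh : (lay M (rx p) == hor M) = false by rewrite ltn_eqF.
    rewrite /rep_rew (negbTE HkK) Hh /= add0r /rep_tr Hlt Hk1 sum_cond.
    rewrite (@slice _ _ _ M K HK (rk p).+1 (fun y => lay M y == lay M (rx p))) //; last first.
      by move=> y /eqP ->; rewrite Hlt.
    transitivity (\sum_(x' | lay M x' == lay M (rx p))
       (if a == pe (rx p) then (x' == rx p)%:R else occ M pb (lay M (rx p)) x') *
        Qfun M (det_pol pe) (lay M (rx p)) x' (pe x')).
      apply: eq_bigr => x' /eqP Hx'; rewrite !rx_mk; congr (_ * _).
      rewrite IH; last first.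
        move: Hn; rewrite /rep_lay rx_mk rk_mk ?Hx' ?Hlt //=; nia.
      by have := Fq_pe (mk (rk p).+1 x'); rewrite rx_mk => ->; rewrite Hx'.
    rewrite /Fq Hlt (negbTE HkK); case: ifP => Ha //.
    rewrite (bigD1 (rx p)) //= eqxx mul1r big1 ?addr0 // => y /andP [_ Hy].
    by rewrite (negbTE Hy) mul0r.
Qed.

End Rep2.

Section Rep3.
Variables (R : realFieldType) (S A : finType) (M : mdp R S A) (K : nat).
Variables (pe : S -> A) (pb : S -> A -> R).
Hypothesis HL : is_layered_mdp M.
Hypothesis HK : (0 < K)%N.

Local Notation Mt := (rep_mdp M K pe pb).
Local Notation mk := (mk M HK).

Variables (pi : RS M K -> A -> R) (pi0 : S -> A -> R).
Hypothesis Hlast : forall p a, (rk p).+1 = K -> pi p a = pi0 (rx p) a.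
Hypothesis Hmid : forall h k x', (1 <= h)%N -> (h < hor M)%N -> (k.+1 < K)%N -> lay M x' = h ->
   \sum_(x | lay M x == h) occ M pi0 h x *
      \sum_a pi (mk k x) a * (if a == pe x then (x' == x)%:R else occ M pb h x')
   = occ M pi0 h x'.

Lemma step_form (d : RS M K -> R) (c : pred (RS M K)) (D : RS M K -> R) p' :
  (forall q, d q = if c q then D q else 0) ->
  occ_step Mt pi d p' = \sum_(q | c q) D q * \sum_a pi q a * rep_tr pe pb q a p'.
Proof.
move=> Hd; rewrite /occ_step -sum_cond; apply: eq_bigr => q _.
rewrite big_distrr; apply: eq_bigr => a _ /=; by rewrite Hd mulrA.
Qed.

Lemma occ_rep m : forall h k (p : RS M K), (h.-1 * K + k)%N = m ->
  (1 <= h <= hor M)%N -> (k < K)%N -> (h < hor M)%N || (k == 0)%N ->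
  occ Mt pi (h.-1 * K + k + 1) p =
  if (rk p == k) && (lay M (rx p) == h) then occ M pi0 h (rx p) else 0.
Proof.
elim: m => [|m IH] h k p Hm Hh Hk Hv.
- have [-> ->] : h = 1%N /\ k = 0%N by nia.
  rewrite /= /occ /= /rep_init; case: eqP => Hr //=; case: eqP => Hl //.
  by rewrite (init_off HL) //; apply/eqP.
- rewrite Hm addn1 occS //.
  case: k Hm Hk Hv => [|k] Hm Hk Hv.
  + case: h Hm Hh Hv => [|h] Hm Hh Hv; first by nia.
    rewrite /= in Hm.
    have Hh2 : (1 <= h)%N by nia.
    have Hh1 : (h < hor M)%N by nia.
    have IHq q : occ Mt pi m.+1 q = if (rk q == K.-1) && (lay M (rx q) == h)
                                   then occ M pi0 h (rx q) else 0.
      have E : (m.+1 = h.-1 * K + K.-1 + 1)%N by nia.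
      by rewrite E IH //; nia.
    rewrite (step_form _ IHq).
    rewrite (@slice _ _ _ M K HK K.-1 (fun y => lay M y == h)) //; last first.
      - by move=> y /eqP ->; rewrite Hh1.
      - by nia.
    have Hv0 x : lay M x == h -> (lay M x < hor M)%N || (K.-1 == 0)%N.
      by move/eqP ->; rewrite Hh1.
    have HrkK x : lay M x == h -> rk (mk K.-1 x) = K.-1.
      by move=> Hx; rewrite rk_mk ?Hv0 //; nia.
    transitivity (\sum_(x | lay M x == h) occ M pi0 h x *
       \sum_a pi0 x a * (if rk p == 0%N then tr M x a (rx p) else 0)).
      apply: eq_bigr => x Hx; rewrite rx_mk; congr (_ * _); apply: eq_bigr => a _.
      rewrite Hlast ?HrkK // ?rx_mk; last by nia.
      rewrite /rep_tr rx_mk (eqP Hx) Hh1 HrkK //.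
      by have -> : (K.-1.+1 < K)%N = false by nia.
    case: eqP => Hr /=; last first.
      by rewrite big1 // => x _; rewrite big1 ?mulr0 // => a _; rewrite mulr0.
    rewrite occS //.
    transitivity (occ_step M pi0 (occ M pi0 h) (rx p)).
      rewrite /occ_step [RHS](bigID (fun y => lay M y == h)) /= [X in _ = _ + X]big1 ?addr0.
        by apply: eq_bigr => x _; rewrite big_distrr; apply: eq_bigr => a _; exact: mulrA.
      move=> x Hx; rewrite (occ_off HL) ?Hx //; last by nia.
      by rewrite big1 // => a _; rewrite !mul0r.
    case: eqP => Hl //; rewrite -occS //.
    by rewrite (occ_off HL) //; first [apply/eqP; nia | nia].
  + have Hh1 : (h < hor M)%N by move: Hv; rewrite orbF.
    have IHq q : occ Mt pi m.+1 q = if (rk q == k) && (lay M (rx q) == h)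
                                   then occ M pi0 h (rx q) else 0.
      have E : (m.+1 = h.-1 * K + k + 1)%N by nia.
      by rewrite E IH ?Hh1 //; nia.
    rewrite (step_form _ IHq).
    rewrite (@slice _ _ _ M K HK k (fun y => lay M y == h)) //; last first.
      - by move=> y /eqP ->; rewrite Hh1.
      - by nia.
    have Hrk x : lay M x == h -> rk (mk k x) = k.
      by move=> Hx; rewrite rk_mk ?(eqP Hx) ?Hh1 //; nia.
    case: (boolP ((rk p == k.+1) && (lay M (rx p) == h))) => Hc; last first.
      rewrite big1 // => x Hx; rewrite big1 ?mulr0 // => a _.
      rewrite /rep_tr rx_mk (eqP Hx) Hh1 Hrk // Hk.
      by rewrite (negbTE Hc) mulr0.
    rewrite -(@Hmid h k (rx p)) //; first last.
    - by case/andP: Hc => _ /eqP.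
    - by case/andP: Hh.
    apply: eq_bigr => x Hx; rewrite rx_mk; congr (_ * _); apply: eq_bigr => a _.
    by rewrite /rep_tr rx_mk (eqP Hx) Hh1 Hrk // Hk Hc.
Qed.

End Rep3.

Section Rep4.
Variables (R : realFieldType) (S A : finType) (M : mdp R S A) (K : nat).
Variables (pe : S -> A) (pb : S -> A -> R) (po : S -> A).
Hypothesis HL : is_layered_mdp M.
Hypothesis HK : (0 < K)%N.
Hypothesis Hpb : is_policy pb.
Hypothesis Hpo : forall x, po x != pe x.

Local Notation Mt := (rep_mdp M K pe pb).
Local Notation mk := (mk M HK).

Lemma sum_layer pi h : is_policy pi -> (1 <= h <= hor M)%N ->
  \sum_(x | lay M x == h) occ M pi h x = 1.
Proof.
move=> Hpi Hh; rewrite -(occ_sum1 HL Hpi Hh) [RHS](bigID (fun x => lay M x == h)) /=.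
by rewrite [X in _ = _ + X]big1 ?addr0 // => x Hx; rewrite (occ_off HL).
Qed.

Lemma occ_pet (p : RS M K) :
  occ Mt (det_pol (rep_pe M K pe)) (lay Mt p) p = occ M (det_pol pe) (lay M (rx p)) (rx p).
Proof.
have Hlast : forall (q : RS M K) a, (rk q).+1 = K ->
    @det_pol R _ _ (rep_pe M K pe) q a = det_pol pe (rx q) a by [].
have Hmid : forall h k x', (1 <= h)%N -> (h < hor M)%N -> (k.+1 < K)%N -> lay M x' = h ->
   \sum_(x | lay M x == h) occ M (det_pol pe) h x *
      \sum_a det_pol (rep_pe M K pe) (mk k x) a *
         (if a == pe x then (x' == x)%:R else occ M pb h x')
   = occ M (det_pol pe) h x'.
  move=> h k x' _ _ _ Hx'.
  under eq_bigr => x _ do rewrite (sum_det (rep_pe M K pe)) /rep_pe rx_mk eqxx.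
  rewrite (bigD1 x') ?Hx' //= eqxx mulr1 big1 ?addr0 // => y /andP [_ Hy].
  by rewrite eq_sym (negbTE Hy) mulr0.
have := occ_rep HL Hlast Hmid p (erefl _) (lay_bnd HL _) (rk_lt p) (rs_valid p).
by rewrite !eqxx.
Qed.

Lemma occ_pbt (p : RS M K) :
  occ Mt (rep_pb M K pe pb po) (lay Mt p) p = occ M pb (lay M (rx p)) (rx p).
Proof.
have Hlast : forall (q : RS M K) a, (rk q).+1 = K ->
    rep_pb M K pe pb po q a = pb (rx q) a.
  by move=> q a Hq; rewrite /rep_pb Hq eqxx.
have Hmid : forall h k x', (1 <= h)%N -> (h < hor M)%N -> (k.+1 < K)%N -> lay M x' = h ->
   \sum_(x | lay M x == h) occ M pb h x *
      \sum_a rep_pb M K pe pb po (mk k x) a *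
         (if a == pe x then (x' == x)%:R else occ M pb h x')
   = occ M pb h x'.
  move=> h k x' Hh1 Hh Hk Hx'.
  transitivity (\sum_(x | lay M x == h) occ M pb h x *
      (2^-1 * (x' == x)%:R + 2^-1 * occ M pb h x')).
    apply: eq_bigr => x /eqP Hx; congr (_ * _).
    have Hr : rk (mk k x) = k by rewrite rk_mk ?Hx ?Hh //; lia.
    rewrite /rep_pb Hr rx_mk.
    have -> : (k.+1 == K) = false by apply/negbTE; rewrite neq_ltn Hk.
    under eq_bigr => a _ do rewrite mulrDl -!mulrA.
    rewrite big_split /= -!big_distrr /= !sum_det eqxx.
    by rewrite (negbTE (Hpo x)).
  under eq_bigr => x _ do rewrite mulrDr.
  rewrite big_split /= (bigD1 x') ?Hx' //= eqxx mulr1 big1 ?addr0; last first.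
    by move=> y /andP [_ Hy]; rewrite eq_sym (negbTE Hy) !mulr0.
  under eq_bigr => x _ do rewrite mulrCA.
  rewrite -big_distrr /= -big_distrl /= (sum_layer Hpb) ?mul1r; last by rewrite Hh1 ltnW.
  lra.
have := occ_rep HL Hlast Hmid p (erefl _) (lay_bnd HL _) (rk_lt p) (rs_valid p).
by rewrite !eqxx.
Qed.

End Rep4.

Unset Implicit Arguments. Set Strict Implicit.

Theorem mainTheorem13 (R : realFieldType) (S A : finType) (M : mdp R S A)
    (pe : S -> A) (pb : S -> A -> R) (po : S -> A) (K : nat) :
  (1 < #|A|)%N ->
  is_layered_mdp M ->
  is_policy pb ->
  (forall x, po x != pe x) ->
  (0 < K)%N ->
  let Mt := rep_mdp M K pe pb in
  let pet := det_pol (rep_pe M K pe) in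
  let pbt := rep_pb M K pe pb po in
  (forall C : R,
     (forall (h : nat) (x : S) (a : A), (1 <= h <= hor M)%N -> lay M x = h ->
        occSA M (det_pol pe) h x a <= C * occSA M pb h x a) ->
     (forall (l : nat) (p : RS M K) (a : A), (1 <= l <= hor Mt)%N -> lay Mt p = l ->
        occSA Mt pet l p a <= 2 * C * occSA Mt pbt l p a))
  /\
  (forall (p : RS M K) (a : A),
     let x := rx p in let h := lay M x in
     Qfun Mt pet (lay Mt p) p a =
       if (h < hor M)%N then
         (if (rk p).+1 == K then Qfun M (det_pol pe) h x a
          else if a == pe x then Qfun M (det_pol pe) h x (pe x)
          else \sum_(x' | lay M x' == h)
                 occ M pb h x' * Qfun M (det_pol pe) h x' (pe x'))
       else Qfun M (det_pol pe) (hor M) x a)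
  /\
  value Mt pet = value M (det_pol pe).
Proof.
move=> _ HL Hpb Hpo HK Mt pet pbt.
have H1 : (1 <= 1 <= hor M)%N by case: HL => H0 _ _ _ _; rewrite H0.
split; [|split].
- move=> C HC l p a _ <-.
  have C0 : 0 <= C.
    rewrite leNgt; apply/negP => HC0.
    have Hs : \sum_(x | lay M x == 1%N) init M x <=
              C * \sum_(x | lay M x == 1%N) (init M x * pb x (pe x)).
      rewrite big_distrr /=; apply: ler_sum => x /eqP Hx.
      have := HC 1%N x (pe x) H1 Hx; rewrite /occSA /det_pol eqxx mulr1.
      by [].
    have Hpe : is_policy (@det_pol R _ _ pe).
      move=> x; split=> [b|]; first by rewrite /det_pol; case: eqP.
      by rewrite (bigD1 (pe x)) //= /det_pol eqxx big1 ?addr0 // => b /negbTE ->.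
    have Hs1 : \sum_(x | lay M x == 1%N) init M x = 1 by exact: (sum_layer HL Hpe H1).
    rewrite Hs1 in Hs.
    have : C * \sum_(x | lay M x == 1%N) (init M x * pb x (pe x)) <= 0.
      apply: mulr_le0_ge0; first exact: ltW.
      apply: sumr_ge0 => x _.
      case: HL => _ _ [Hi _] _ _; case: (Hpb x) => Hp _.
      by rewrite mulr_ge0.
    lra.
  rewrite /occSA occ_pet // occ_pbt //.
  set x := rx p; set h := lay M x.
  have Hh := lay_bnd HL x.
  have Hx := HC h x a Hh (erefl _); rewrite /occSA in Hx.
  have Ho : 0 <= occ M pb h x by apply: occ_ge0 => // y b; case: (Hpb y) => ->.
  have [Hpa Hpa1] : 0 <= pb x a /\ pb x a <= 1.
    case: (Hpb x) => Hp Hs; split => //; rewrite -Hs (bigD1 a) //= lerDl.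
    by apply: sumr_ge0 => b _.
  have -> : pet p a = det_pol pe x a by [].
  rewrite /pbt /rep_pb.
  case: eqP => HkK.
  + have : 0 <= C * (occ M pb h x * pb x a) by rewrite !mulr_ge0.
    rewrite -mulrA; lra.
  + case: (eqVneq a (pe x)) => Ha.
    * have -> : det_pol pe x a = 1 by rewrite /det_pol Ha eqxx.
      have -> : det_pol po x a = 0 by rewrite /det_pol Ha eq_sym (negbTE (Hpo x)).
      rewrite mulr0 addr0 !mulr1.
      have Hd : det_pol pe x a = 1 by rewrite /det_pol Ha eqxx.
      rewrite Hd mulr1 Ha in Hx.
      have : C * (occ M pb h x * pb x (pe x)) <= C * occ M pb h x.
        by rewrite ler_wpM2l // ler_piMr // -Ha.
      have -> : 2 * C * (occ M pb h x * 2^-1) = C * occ M pb h x.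
        by field.
      lra.
    * have -> : det_pol pe x a = 0 by rewrite /det_pol (negbTE Ha).
      rewrite mulr0 mulr0 add0r.
      have : 0 <= @det_pol R _ _ po x a by rewrite /det_pol; case: eqP.
      move=> Hd; apply: mulr_ge0; first by apply: mulr_ge0 => //; lra.
      apply: mulr_ge0 => //; apply: mulr_ge0; [by rewrite invr_ge0 ler0n | exact: Hd].
- move=> p a; exact (Qclaim HL HK a (erefl _)).
- rewrite /value /pet.
  under eq_bigr => p _ do rewrite (sum_det (rep_pe M K pe)).
  under [RHS]eq_bigr => x _ do rewrite (sum_det pe).
  rewrite /= /rep_init sum_cond (slice0 HK).
  apply: eq_bigr => x _; rewrite rx_mk.
  case: (eqVneq (init M x) 0) => Hi; first by rewrite Hi !mul0r.
  have Hx1 : lay M x = 1%N by case: HL => _ _ _ H4 _; apply: H4.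
  congr (_ * _); rewrite /rep_pe rx_mk.
  have Hr : rk (mk M HK 0 x) = 0%N by rewrite rk_mk ?orbT.
  have E : (hor Mt - 1 = hor Mt - rep_lay (mk M HK 0 x))%N.
    by rewrite /rep_lay rx_mk Hr Hx1.
  rewrite /Qfun E (Qclaim HL HK _ (erefl _)).
  by have := Fq_pe pe pb HL HK (mk M HK 0 x); rewrite rx_mk Hx1 => ->.
Qed.
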